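(* Let $F,L,\Sigma,\alpha,\bar v$ be as below, and set $\bar\omega=\alpha+\bar v$. Fix $b\in(0,1)$. Let $\mathcal{P}^*$ be a solution of the convex program $$\min_{\mathcal{P}}\ -\log\det\mathcal{P}\quad\text{s.t.}\quad \mathcal{P}\succ 0\ \text{ and }\ \mathrm{(LMI)} .$$ Then: (i) the ellipsoid $\mathcal{E}^*=\{e: e^T\mathcal{P}^*e\le1\}$ contains the reachable set $\mathcal{R}$; (ii) among all ellipsoids $\{e: e^T\mathcal{P}e\le 1\}$ with $\mathcal{P}\succ0$ satisfying (LMI) for this $b$, the ellipsoid $\mathcal{E}^*$ has minimal volume.
   Context: $F\in\mathbb{R}^{n\times n}$, $L\in\mathbb{R}^{n\times m}$, $\Sigma\in\mathbb{R}^{m\times m}$ symmetric positive definite with symmetric square root $\Sigma^{1/2}$, and $\alpha,\bar v>0$. (LMI) denotes the matrix inequality $$\begin{bmatrix} b\mathcal{P} & F^T \mathcal{P} & 0 & 0 & 0 & 0\\ \mathcal{P} F & \mathcal{P} & \mathcal{P} & -\mathcal{P} L \Sigma^{1/2} & 0 & 0\\ 0 & \mathcal{P} & \tfrac{1-b}{\bar{\omega}}I & 0 & 0 & 0\\ 0 & -\Sigma^{1/2}L^T \mathcal{P} & 0 & \tfrac{1-b}{\bar{\omega}}I & 0 & 0\\ 0 & 0 & 0 & 0 & I & 0\\ 0 & 0 & 0 & 0 & 0 & I \end{bmatrix}\succeq 0 .$$ $\mathcal{R}$ is the set of all states $e_k$ ($k\in\mathbb{N}$) of $e_{k+1}=Fe_k-L\Sigma^{1/2}\zeta_k+v_k$,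 $e_1=0$, over all input sequences with $\|\zeta_k\|^2\le\alpha$ and $\|v_k\|^2\le\bar v$ for all $k$. The volume of $\{e:e^T\mathcal{P}e\le1\}$ is proportional to $(\det\mathcal{P})^{-1/2}$. *)

(* Defs.v *)
From HB Require Import structures.
From mathcomp Require Import all_boot all_order all_algebra.
Set Implicit Arguments. Unset Strict Implicit. Unset Printing Implicit Defensive.
Import Order.TTheory GRing.Theory Num.Theory.
Local Open Scope ring_scope.

Definition qform (R : rcfType) (k : nat) (M : 'M[R]_k) (x : 'cV[R]_k) : R :=
  (x^T *m M *m x) 0 0.

Definition sqnorm (R : rcfType) (k : nat) (x : 'cV[R]_k) : R := (x^T *m x) 0 0.

Definition psd (R : rcfType) (k : nat) (M : 'M[R]_k) : Prop :=
  M^T = M /\ forall x : 'cV[R]_k, 0 <= qform M x.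

Definition pd (R : rcfType) (k : nat) (M : 'M[R]_k) : Prop :=
  M^T = M /\ forall x : 'cV[R]_k, x != 0 -> 0 < qform M x.

(* The block matrix of (LMI), with S = Sigma^{1/2} and omega = alpha + vbar.
   Block sizes: n | n | n | m | n | n. *)
Definition LMI_mx (R : rcfType) (n m : nat) (F : 'M[R]_n) (L : 'M[R]_(n, m))
  (S : 'M[R]_m) (omega b : R) (P : 'M[R]_n) : 'M[R]_(n + n + (n + m) + (n + n)) :=
  let c := (1 - b) / omega in
  let A11 : 'M[R]_(n + n) := block_mx (b *: P) (F^T *m P) (P *m F) P in
  let A12 : 'M[R]_(n + n, n + m) := block_mx 0 0 P (- (P *m L *m S)) in
  let A21 : 'M[R]_(n + m, n + n) := block_mx 0 P 0 (- (S *m L^T *m P)) in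
  let A22 : 'M[R]_(n + m) := block_mx (c%:M) 0 0 (c%:M) in
  block_mx (block_mx A11 A12 A21 A22) 0 0 (1%:M : 'M[R]_(n + n)).

Definition LMI (R : rcfType) (n m : nat) (F : 'M[R]_n) (L : 'M[R]_(n, m))
  (S : 'M[R]_m) (omega b : R) (P : 'M[R]_n) : Prop :=
  psd (LMI_mx F L S omega b P).

(* traj k = e_{k+1} of e_{k+1} = F e_k - L S zeta_k + v_k, e_1 = 0
   (index shifted by one: traj 0 = e_1, zeta/v indexed from 0 = step 1). *)
Fixpoint traj (R : rcfType) (n m : nat) (F : 'M[R]_n) (L : 'M[R]_(n, m))
  (S : 'M[R]_m) (zeta : nat -> 'cV[R]_m) (v : nat -> 'cV[R]_n) (k : nat)
  : 'cV[R]_n :=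
  match k with
  | 0 => 0
  | k'.+1 => F *m traj F L S zeta v k' - L *m S *m zeta k' + v k'
  end.

Definition reachable (R : rcfType) (n m : nat) (F : 'M[R]_n) (L : 'M[R]_(n, m))
  (S : 'M[R]_m) (alpha vbar : R) (e : 'cV[R]_n) : Prop :=
  exists (zeta : nat -> 'cV[R]_m) (v : nat -> 'cV[R]_n) (k : nat),
    (forall j, sqnorm (zeta j) <= alpha) /\ (forall j, sqnorm (v j) <= vbar) /\
    e = traj F L S zeta v k.

(* volume of {e : e^T P e <= 1} up to the constant factor: (det P)^(-1/2) *)
Definition vol_factor (R : rcfType) (n : nat) (P : 'M[R]_n) : R :=
  (Num.sqrt (\det P))^-1.

(* Main.v *)
Require Import Defs.
From HB Require Import structures.
From mathcomp Require Import all_boot all_order all_algebra.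
From mathcomp Require Import lra.
Import Order.TTheory GRing.Theory Num.Theory.
Local Open Scope ring_scope.

Lemma pd_det_gt0 (R : rcfType) n (P : 'M[R]_n) : pd P -> 0 < \det P.
Proof.
elim: n P => [|n IH]; first by move=> P _; rewrite det_mx00.
change (forall P : 'M[R]_(1 + n), pd P -> 0 < \det P) => P [Ps Pp].
have EP : P = block_mx (ulsubmx P) (ursubmx P) (dlsubmx P) (drsubmx P) by rewrite submxK.
move: (ulsubmx P) (ursubmx P) (dlsubmx P) (drsubmx P) EP => A B u Q EP.
have Ps' : (block_mx A B u Q)^T = block_mx A B u Q by rewrite -EP.
rewrite tr_block_mx in Ps'.
have [hA hB hu hQ] := eq_block_mx Ps'.
pose a := A 0 0.
have EA : A = a%:M by apply/matrixP => i j; rewrite !ord1 mxE.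
have a_gt0 : 0 < a.
  have H : (col_mx (1 : 'cV[R]_1) (0 : 'cV[R]_n)) != 0 by rewrite col_mx_eq0 oner_eq0.
  have := Pp _ H.
  rewrite /qform EP tr_col_mx mul_row_block mul_row_col trmx0 trmx1 !mul0mx !mulmx0 !addr0 mul1mx mulmx1.
  by [].
have a0 : a != 0 by rewrite (gt_eqF a_gt0).
pose S := Q - a^-1 *: (u *m B).
pose T : 'M[R]_(1 + n) := block_mx 1 0 (- (a^-1 *: u)) 1.
have ET : T *m P *m T^T = block_mx a%:M 0 0 S.
  rewrite EP /T tr_block_mx !mulmx_block EA.
  rewrite !trmx0 !trmx1 !mul0mx !mulmx0 !mul1mx !mulmx1 !addr0 ?add0r mul_mx_scalar mul_scalar_mx.
  rewrite scalerN scalerA mulfV // scale1r addNr mul0mx add0r.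
  rewrite linearN /= linearZ /= scalerN scalerA mulfV // scale1r hB addNr.
  by rewrite /S mulNmx -scalemxAl addrC.
have detT : \det T = 1 by rewrite /T det_lblock !det1 mulr1.
have : \det (T *m P *m T^T) = \det P by rewrite !det_mulmx det_tr detT mul1r mulr1.
rewrite ET det_ublock det_scalar1 => <-.
apply: mulr_gt0 => //; apply: IH; split.
  by rewrite /S linearB /= linearZ /= trmx_mul hB hu hQ.
move=> y y0.
have Hx : T^T *m col_mx 0 y != 0.
  rewrite /T tr_block_mx mul_block_col !mulmx0 !add0r trmx1 mul1mx col_mx_eq0.
  by rewrite (negbTE y0) andbF.
have := Pp _ Hx.
have E : (T^T *m col_mx 0 y)^T *m P *m (T^T *m col_mx 0 y) = (col_mx 0 y)^T *m (T *m P *m T^T) *m col_mx 0 y.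
  by rewrite trmx_mul trmxK !mulmxA.
rewrite /qform E ET tr_col_mx trmx0 mul_row_block mul_row_col !mul0mx !mulmx0 !add0r ?addr0.
by [].
Qed.

Lemma tr11 (R : rcfType) (A : 'M[R]_1) : A^T = A.
Proof. by apply/matrixP => i j; rewrite !ord1 mxE. Qed.

Lemma trN (R : rcfType) k l (A : 'M[R]_(k, l)) : (- A)^T = - A^T.
Proof. by apply/matrixP => i j; rewrite !mxE. Qed.

Lemma lmi_step (R : rcfType) n m (F : 'M[R]_n) (L : 'M[R]_(n, m)) (S : 'M[R]_m)
  (omega b : R) (P : 'M[R]_n) (e : 'cV[R]_n) (z : 'cV[R]_m) (v : 'cV[R]_n) :
  P^T = P -> S^T = S -> LMI F L S omega b P ->
  qform P (F *m e - L *m S *m z + v) <= b * qform P e + (1 - b) / omega * (sqnorm v + sqnorm z).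
Proof.
move=> hP hS [_ Hpsd].
set y := F *m e - L *m S *m z + v.
set c := (1 - b) / omega.
have := Hpsd (col_mx (col_mx (col_mx e (-y)) (col_mx v z)) 0).
rewrite /qform /LMI_mx !tr_col_mx !mul_row_block !mul_row_col !trmx0 !mul0mx !mulmx0 !addr0 ?add0r.
rewrite !add_row_mx !mul_row_col !mulmxDl ?mul0mx ?add0r.
have h2 : e^T *m (F^T *m P) *m - y = (- y)^T *m (P *m F) *m e.
  by rewrite -[LHS]tr11 !trmx_mul !trmxK hP !mulmxA.
have h7 : v^T *m P *m - y = (- y)^T *m P *m v.
  by rewrite -[LHS]tr11 !trmx_mul !trmxK hP !mulmxA.
have h8 : z^T *m - (S *m L^T *m P) *m - y = (- y)^T *m - (P *m L *m S) *m z.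
  by rewrite -[LHS]tr11 !trmx_mul !trmxK !linearN /= !trmx_mul hP hS !trmxK !mulmxA !(mulmxN, mulNmx, opprK, mulmxA).
have hb : e^T *m (b *: P) *m e = b *: (e^T *m P *m e) by rewrite -scalemxAr -scalemxAl.
have hv : v^T *m c%:M *m v = c *: (v^T *m v) by rewrite mul_mx_scalar -scalemxAl.
have hz : z^T *m c%:M *m z = c *: (z^T *m z) by rewrite mul_mx_scalar -scalemxAl.
have hX : (- y)^T *m P *m - y = y^T *m P *m y.
  by rewrite trN !mulNmx !mulmxN opprK.
have hK : (- y)^T *m (P *m F) *m e + (- y)^T *m P *m v + (- y)^T *m - (P *m L *m S) *m z
   = - (y^T *m P *m y).
  have gen : forall w : 'rV[R]_n, w *m (P *m F) *m e + w *m P *m v + w *m - (P *m L *m S) *m z = w *m P *m (F *m e - L *m S *m z + v).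
    move=> w; rewrite !mulmxDr !mulmxN !mulNmx !mulmxA.
    by rewrite addrAC.
  by rewrite trN !mulNmx -!opprD gen.
rewrite -/c h2 h7 h8 hb hv hz hX.
move: hK; rewrite /sqnorm.
move: ((- y)^T *m (P *m F) *m e) ((- y)^T *m P *m v) ((- y)^T *m - (P *m L *m S) *m z)
  (y^T *m P *m y) (e^T *m P *m e) (v^T *m v) (z^T *m z) => A1 A2 A3 Q E V Z.
move=> /(congr1 (fun M : 'M[R]_1 => M 0 0)) /=; rewrite !mxE => hK H.
rewrite mulrDr; lra.
Qed.

Theorem corollary1 (R : rcfType) (n m : nat)
  (F : 'M[R]_n) (L : 'M[R]_(n, m)) (Sigma S : 'M[R]_m) (alpha vbar b : R)
  (Pstar : 'M[R]_n) :
  pd Sigma -> S^T = S -> S *m S = Sigma ->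
  0 < alpha -> 0 < vbar -> 0 < b < 1 ->
  (* Pstar solves  min_P -log det P  s.t.  P > 0 and (LMI);
     since log is strictly increasing, -log det P >= -log det Pstar
     is expressed as det P <= det Pstar *)
  pd Pstar -> LMI F L S (alpha + vbar) b Pstar ->
  (forall P : 'M[R]_n, pd P -> LMI F L S (alpha + vbar) b P ->
     \det P <= \det Pstar) ->
  (forall e : 'cV[R]_n, reachable F L S alpha vbar e -> qform Pstar e <= 1) /\
  (forall P : 'M[R]_n, pd P -> LMI F L S (alpha + vbar) b P ->
     vol_factor Pstar <= vol_factor P).
Proof.
move=> _ hS _ ha hv /andP[b0 b1] hPs hL hmin; split.
  move=> e [zeta [v [k [hz [hvb ->]]]]].
  have hP : Pstar^T = Pstar by case: hPs.
  have om0 : 0 < alpha + vbar by rewrite addr_gt0.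
  have c0 : 0 <= (1 - b) / (alpha + vbar) by rewrite divr_ge0 // ?subr_ge0 ?ltW.
  elim: k => [|k IH] /=.
    by rewrite /qform mulmx0 mxE.
  apply: le_trans (lmi_step _ _ _ _ _ _ _ _ _ _ _ _ hP hS hL) _.
  have h1 : b * qform Pstar (traj F L S zeta v k) <= b by rewrite -[leRHS]mulr1 ler_wpM2l // ltW.
  have h2 : (1 - b) / (alpha + vbar) * (sqnorm (v k) + sqnorm (zeta k)) <= 1 - b.
    rewrite -[leRHS](divfK (lt0r_neq0 om0) (1 - b)) ler_wpM2l //.
    by rewrite addrC lerD.
  by apply: le_trans (lerD h1 h2) _; rewrite addrC subrK.
move=> P hP hLP.
have dP := pd_det_gt0 _ _ _ hP.
have dPs := pd_det_gt0 _ _ _ hPs.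
rewrite /vol_factor lef_pV2 ?posrE ?sqrtr_gt0 //.
by rewrite ler_sqrt; [exact: hmin | exact: ltW].
Qed.
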